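(* Let $N_x,N_y\ge3$, $\Delta x,\Delta y>0$, $\ell>0$. Consider the grid points $(i,j)$, $1\le i\le N_x$, $1\le j\le N_y$, with neighbor relation $(i,j)\sim(i',j')$ iff $|i-i'|+|j-j'|=1$; let $I$ be the set of interior points ($1<i<N_x$, $1<j<N_y$), $B_c$ the four corner points, and $B$ the remaining (non-corner) boundary points. Let positive numbers $D_{\frac{i+i'}{2},\frac{j+j'}{2}}>0$ be given for every neighboring pair, and numbers $\sigma_{i,j}\ge0$ for every grid point. With the index map $\mathcal I(i,j)=(i-1)N_y+j$, define the $N_xN_y\times N_xN_y$ matrix $\mathbf L$ by (writing $w_2(i,j;i',j')=|i-i'|\Delta x^2+|j-j'|\Delta y^2$ and $w_1(i,j;i',j')=|i-i'|\Delta x+|j-j'|\Delta y$, and $D'=D_{\frac{i+i'}{2},\frac{j+j'}{2}}$, $\tilde D=D_{\frac{i+\tilde i}{2},\frac{j+\tilde j}{2}}$): \begin{itemize} \item for $(i,j)\in I$: $\mathbf L_{\mathcal I(i,j),\mathcal I(i,j)}=\sum_{(\tilde i,\tilde j)\sim(i,j)}\tilde D/w_2(i,j;\tilde i,\tilde j)+\sigma_{i,j}$ and $\mathbf L_{\mathcal I(i,j),\mathcal I(i',j')}=-D'/w_2(i,j;i',j')$ for $(i',j')\sim(i,j)$; \item for $(i,j)\in B$: $\mathbf L_{\mathcal I(i,j),\mathcal I(i,j)}=1+\ell\sum_{(\tilde i,\tilde j)\in I,\,(\tilde i,\tilde j)\sim(i,j)}\tilde D/w_1(i,j;\tilde i,\tilde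 j)$ and $\mathbf L_{\mathcal I(i,j),\mathcal I(i',j')}=-\ell D'/w_1(i,j;i',j')$ for $(i',j')\in I$, $(i',j')\sim(i,j)$; \item for $(i,j)\in B_c$: $\mathbf L_{\mathcal I(i,j),\mathcal I(i,j)}=1+\frac{\sqrt2\ell}{2}\sum_{(\tilde i,\tilde j)\sim(i,j)}\tilde D/w_1(i,j;\tilde i,\tilde j)$ and $\mathbf L_{\mathcal I(i,j),\mathcal I(i',j')}=-\frac{\sqrt2\ell}{2}D'/w_1(i,j;i',j')$ for $(i',j')\sim(i,j)$; \item all other entries are $0$. \end{itemize} Then $\mathbf L$ is a weakly chained diagonally dominant (WCDD) matrix.
   Context: $\mathbf L$ is the staggered-grid finite difference matrix discretizing $-\nabla\cdot D\nabla u+\sigma_a u$ on $[x_1,x_{N_x}]\times[y_1,y_{N_y}]$ with the Robin condition $u+\ell\nu\cdot D\nabla u$ on the boundary (isotropic $D$ evaluated at edge midpoints). For a square matrix $A=(A_{kl})$, row $k$ is weakly diagonally dominant (WDD) if $|A_{kk}|\ge\sum_{l\ne k}|A_{kl}|$ and strictly diagonally dominant (SDD) if the inequality is strict; $A$ is WDD if all rows are WDD. $A$ is weakly chained diagonally dominant (WCDD) if $A$ is WDD and for each row $k$ that is not SDD there exist indices $k_1,\dots,k_p$ and $l$ such that $A_{kk_1},A_{k_1k_2},\dots,A_{k_{p-1}k_p},A_{k_pl}$ are all nonzero and row $l$ is SDD. *)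

(* Defs.v *)
From HB Require Import structures.
From mathcomp Require Import all_boot all_order all_algebra.
Set Implicit Arguments. Unset Strict Implicit. Unset Printing Implicit Defensive.
Import Order.TTheory GRing.Theory Num.Theory.
Local Open Scope ring_scope.

Section DD.
Variable R : numDomainType.
Variable n : nat.
Implicit Type A : 'M[R]_n.

Definition row_WDD A (k : 'I_n) : bool :=
  \sum_(l < n | l != k) `|A k l| <= `|A k k|.
Definition row_SDD A (k : 'I_n) : bool :=
  \sum_(l < n | l != k) `|A k l| < `|A k k|.
Definition WDD A : Prop := forall k, row_WDD A k.

(* For each non-SDD row k there are k_1..k_p (the sequence s, p >= 0) and l
   with A k k_1, A k_1 k_2, ..., A k_p l all nonzero and row l SDD. *)
Definition WCDD A : Prop :=
  WDD A /\
  forall k : 'I_n, ~~ row_SDD A k ->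
    exists (s : seq 'I_n) (l : 'I_n),
      path (fun a b => A a b != 0) k (rcons s l) && row_SDD A l.
End DD.

Definition adist (m n : nat) : nat := (m - n) + (n - m).

Definition in_grid (Nx Ny i j : nat) : bool :=
  [&& 1 <= i, i <= Nx, 1 <= j & j <= Ny]%N.
Definition nbr (i j i' j' : nat) : bool := (adist i i' + adist j j' == 1)%N.
Definition interior (Nx Ny i j : nat) : bool :=
  [&& 1 < i, i < Nx, 1 < j & j < Ny]%N.
Definition corner (Nx Ny i j : nat) : bool :=
  ((i == 1) || (i == Nx)) && ((j == 1) || (j == Ny)).
Definition bdry (Nx Ny i j : nat) : bool :=
  [&& in_grid Nx Ny i j, ~~ interior Nx Ny i j & ~~ corner Nx Ny i j].

Section Lmat.
Variable R : rcfType.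
Variables (Nx Ny : nat) (dx dy ell : R).
(* D (i+i') (j+j') stands for D_{(i+i')/2,(j+j')/2} (doubled midpoint coords) *)
Variable D : nat -> nat -> R.
Variable sigma : nat -> nat -> R.

Definition w2 (i j i' j' : nat) : R :=
  (adist i i')%:R * dx ^+ 2 + (adist j j')%:R * dy ^+ 2.
Definition w1 (i j i' j' : nat) : R :=
  (adist i i')%:R * dx + (adist j j')%:R * dy.
Definition Dm (i j i' j' : nat) : R := D (i + i')%N (j + j')%N.

Definition nbr_sum (P : nat -> nat -> bool) (F : nat -> nat -> R) (i j : nat) : R :=
  \sum_(1 <= i' < Nx.+1) \sum_(1 <= j' < Ny.+1 | nbr i j i' j' && P i' j') F i' j'.

Definition cst : R := Num.sqrt 2 * ell / 2.

Definition Lent (i j i' j' : nat) : R :=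
  if interior Nx Ny i j then
    if (i == i') && (j == j') then
      nbr_sum (fun _ _ => true) (fun a b => Dm i j a b / w2 i j a b) i j + sigma i j
    else if nbr i j i' j' then - (Dm i j i' j' / w2 i j i' j') else 0
  else if corner Nx Ny i j then
    if (i == i') && (j == j') then
      1 + cst * nbr_sum (fun _ _ => true) (fun a b => Dm i j a b / w1 i j a b) i j
    else if nbr i j i' j' then - (cst * (Dm i j i' j' / w1 i j i' j')) else 0
  else
    if (i == i') && (j == j') then
      1 + ell * nbr_sum (interior Nx Ny) (fun a b => Dm i j a b / w1 i j a b) i j
    else if interior Nx Ny i' j' && nbr i j i' j' then
      - (ell * (Dm i j i' j' / w1 i j i' j')) else 0.

(* Index map I(i,j) = (i-1) Ny + j (1-based), i.e. row k (0-based) <-> 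
   i = k %/ Ny + 1, j = k %% Ny + 1. *)
Definition Lmat : 'M[R]_(Nx * Ny) :=
  \matrix_(k, m) Lent (k %/ Ny).+1 (k %% Ny).+1 (m %/ Ny).+1 (m %% Ny).+1.
End Lmat.

(* Main.v *)
Require Import Defs.
From HB Require Import structures.
From mathcomp Require Import all_boot all_order all_algebra.
From mathcomp Require Import zify lra.
Import Order.TTheory GRing.Theory Num.Theory.
Local Open Scope ring_scope.

Lemma divmod_pair (M q r : nat) : (r < M)%N -> ((q * M + r) %/ M = q /\ (q * M + r) %% M = r)%N.
Proof.
move=> hr; have M0 : (0 < M)%N by apply: leq_ltn_trans hr.
by rewrite divnMDl // divn_small // addn0 modnMDl modn_small.
Qed.

Lemma sum_grid (R : nmodType) (N M : nat) (G : nat -> nat -> R) :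
  \sum_(l < N * M) G (l %/ M).+1 (l %% M).+1 =
  \sum_(1 <= i < N.+1) \sum_(1 <= j < M.+1) G i j.
Proof.
rewrite -(big_mkord xpredT (fun l => G (l %/ M).+1 (l %% M).+1)).
elim: N => [|N IH]; first by rewrite mul0n !big_geq.
rewrite big_nat_recr //= -IH mulSn addnC (big_cat_nat _ (leq_addr _ _)) //=.
congr (_ + _).
rewrite (big_addn 0 (N * M + M) (N * M)) addKn big_add1 /=.
apply: eq_big_nat => j /andP[_ hj].
by rewrite addnC; have [-> ->] := @divmod_pair M N j hj.
Qed.

Lemma eq_divmod (M k l : nat) : (k == l) = ((k %/ M == l %/ M) && (k %% M == l %% M))%N.
Proof.
apply/eqP/andP => [->|[/eqP e1 /eqP e2]]; first by [].
by rewrite (divn_eq k M) (divn_eq l M) e1 e2.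
Qed.

Lemma nbr_cases i j i' j' : nbr i j i' j' ->
  (adist i i' = 1 /\ adist j j' = 0 \/ adist i i' = 0 /\ adist j j' = 1)%N.
Proof.
rewrite /nbr; move: (adist i i') (adist j j') => a b.
case: a => [|[|a]]; case: b => [|[|b]] //= _; by [left|right].
Qed.

Lemma nbr_neq i j i' j' : nbr i j i' j' -> ~~ ((i == i') && (j == j')).
Proof.
move=> /nbr_cases; rewrite /adist.
by case: eqP => [->|] //=; case: eqP => [->|] //=; rewrite !subnn; case=> [][].
Qed.

Section Main.
Variable R : rcfType.
Variables (Nx Ny : nat) (dx dy ell : R) (D sigma : nat -> nat -> R).
Hypotheses (hNx : (3 <= Nx)%N) (hNy : (3 <= Ny)%N) (hdx : 0 < dx) (hdy : 0 < dy)
  (hell : 0 < ell).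
Hypothesis hD : forall i j i' j', in_grid Nx Ny i j -> in_grid Nx Ny i' j' ->
     nbr i j i' j' -> 0 < D (i + i')%N (j + j')%N.
Hypothesis hsig : forall i j, in_grid Nx Ny i j -> 0 <= sigma i j.

Local Notation A := (Lmat Nx Ny dx dy ell D sigma).
Local Notation Le := (Lent Nx Ny dx dy ell D sigma).

Lemma w_pos i j i' j' : nbr i j i' j' -> 0 < w2 dx dy i j i' j' /\ 0 < w1 dx dy i j i' j'.
Proof.
rewrite /w2 /w1 => /nbr_cases [[-> ->]|[-> ->]]; rewrite !mul0r ?add0r ?addr0 !mul1r;
  split => //; exact: exprn_gt0.
Qed.

Definition off i j i' j' := if (i == i') && (j == j') then 0 else `|Le i j i' j'|.

Lemma offsum (k : 'I_(Nx * Ny)) :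
  \sum_(l < Nx * Ny | l != k) `|A k l| =
  \sum_(l < Nx * Ny) off (k %/ Ny).+1 (k %% Ny).+1 (l %/ Ny).+1 (l %% Ny).+1.
Proof.
rewrite big_mkcond; apply: eq_bigr => l _; rewrite mxE /off !eqSS.
rewrite -(inj_eq val_inj) /= eq_sym (eq_divmod Ny). by case: (_ && _).
Qed.

Lemma off_nbr i j (P : nat -> nat -> bool) F c :
  (forall i' j', in_grid Nx Ny i' j' ->
     off i j i' j' = if nbr i j i' j' && P i' j' then c * F i' j' else 0) ->
  \sum_(l < Nx * Ny) off i j (l %/ Ny).+1 (l %% Ny).+1 = c * nbr_sum Nx Ny P F i j.
Proof.
move=> H; rewrite sum_grid /nbr_sum mulr_sumr; apply: eq_big_nat => i' hi'.
rewrite mulr_sumr [RHS]big_mkcond /=; apply: eq_big_nat => j' hj'.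
rewrite H; last by rewrite /in_grid; move: hi' hj' => /andP[? ?] /andP[? ?]; apply/and4P; split; lia.
by case: ifP.
Qed.

Lemma grid_k (k : 'I_(Nx * Ny)) : in_grid Nx Ny (k %/ Ny).+1 (k %% Ny).+1.
Proof.
have Ny0 : (0 < Ny)%N by lia.
rewrite /in_grid; apply/and4P; split => //.
  by rewrite ltn_divLR // mulnC.
by rewrite ltn_mod.
Qed.

Lemma off_gen i j (P : nat -> nat -> bool) c F : 0 <= c ->
  (forall i' j', in_grid Nx Ny i' j' -> nbr i j i' j' -> 0 <= F i' j') ->
  (forall i' j', ~~ ((i == i') && (j == j')) ->
     Le i j i' j' = if nbr i j i' j' && P i' j' then - (c * F i' j') else 0) ->
  forall i' j', in_grid Nx Ny i' j' ->
     off i j i' j' = if nbr i j i' j' && P i' j' then c * F i' j' else 0.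
Proof.
move=> c0 Fp HL i' j' g'; rewrite /off; case: ifP => [/andP[/eqP<- /eqP<-]|hne].
  have : ~~ nbr i j i j by apply/negP => /nbr_neq; rewrite !eqxx.
  by move/negbTE => ->.
rewrite HL ?hne //; case: ifP => [/andP[hn _]|]; last by rewrite normr0.
by rewrite normrN ger0_norm // mulr_ge0 // Fp.
Qed.

Arguments off_gen {i j P c F}.
Arguments off_nbr {i j P F c}.

Lemma cst_pos : 0 < cst ell.
Proof. by rewrite /cst divr_gt0 // mulr_gt0 // sqrtr_gt0. Qed.

Lemma row_struct (k : 'I_(Nx * Ny)) :
  exists b, [/\ 0 <= b, A k k = b + \sum_(l < Nx * Ny | l != k) `|A k l| &
     (~~ interior Nx Ny (k %/ Ny).+1 (k %% Ny).+1 -> 0 < b)].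
Proof.
have g := grid_k k; rewrite offsum mxE.
move: g; set i := (k %/ Ny).+1; set j := (k %% Ny).+1 => g.
have Fp1 : forall i' j', in_grid Nx Ny i' j' -> nbr i j i' j' -> 0 <= Dm D i j i' j' / w1 dx dy i j i' j'.
  move=> i' j' g' hn; have [_ w] := @w_pos i j i' j' hn; apply/ltW/divr_gt0 => //; exact: hD.
have Fp2 : forall i' j', in_grid Nx Ny i' j' -> nbr i j i' j' -> 0 <= Dm D i j i' j' / w2 dx dy i j i' j'.
  move=> i' j' g' hn; have [w _] := @w_pos i j i' j' hn; apply/ltW/divr_gt0 => //; exact: hD.
set F1 := fun a b => Dm D i j a b / w1 dx dy i j a b.
set F2 := fun a b => Dm D i j a b / w2 dx dy i j a b.
rewrite /Lent !eqxx /=; case: ifP => hint.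
  have HL : forall i' j', ~~ ((i == i') && (j == j')) ->
     Le i j i' j' = if nbr i j i' j' && true then - (1 * F2 i' j') else 0.
    by move=> i' j' /negbTE hne; rewrite /Lent hint hne andbT mul1r.
  move: (off_nbr (off_gen ler01 Fp2 HL)); rewrite mul1r => ->.
  by exists (sigma i j); split; [exact: hsig|exact: addrC|].
case: ifP => hc.
  have HL : forall i' j', ~~ ((i == i') && (j == j')) ->
     Le i j i' j' = if nbr i j i' j' && true then - (cst ell * F1 i' j') else 0.
    by move=> i' j' /negbTE hne; rewrite /Lent hint hc hne andbT.
  move: (off_nbr (off_gen (ltW cst_pos) Fp1 HL)) => ->.
  by exists 1; split.
have HL : forall i' j', ~~ ((i == i') && (j == j')) ->
   Le i j i' j' = if nbr i j i' j' && interior Nx Ny i' j' then - (ell * F1 i' j') else 0.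
  by move=> i' j' /negbTE hne; rewrite /Lent hint hc hne andbC.
move: (off_nbr (off_gen (ltW hell) Fp1 HL)) => ->.
by exists 1; split.
Qed.

Lemma offsum_ge0 (k : 'I_(Nx * Ny)) : 0 <= \sum_(l < Nx * Ny | l != k) `|A k l|.
Proof. by apply: sumr_ge0 => l _; exact: normr_ge0. Qed.

Lemma wdd : WDD A.
Proof.
move=> k; have [b [b0 e _]] := row_struct k.
by rewrite /row_WDD e ger0_norm ?lerDr ?addr_ge0 ?offsum_ge0.
Qed.

Lemma sdd_ext (k : 'I_(Nx * Ny)) :
  ~~ interior Nx Ny (k %/ Ny).+1 (k %% Ny).+1 -> row_SDD A k.
Proof.
move=> hi; have [b [b0 e /(_ hi) bp]] := row_struct k.
by rewrite /row_SDD e ger0_norm ?ltrDr ?addr_ge0 ?offsum_ge0.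
Qed.

Lemma step (k : 'I_(Nx * Ny)) : interior Nx Ny (k %/ Ny).+1 (k %% Ny).+1 ->
  exists k' : 'I_(Nx * Ny), (k' < k)%N /\ A k k' != 0.
Proof.
move=> hint; have g := grid_k k.
have Ny0 : (0 < Ny)%N by lia.
have ek := divn_eq k Ny.
move: hint g ek; set q := (k %/ Ny)%N; set r := (k %% Ny)%N => hint g ek.
have hr : (r < Ny)%N by rewrite ltn_mod.
have q1 : (1 <= q)%N by move: hint; rewrite /interior => /and4P[? _ _ _]; lia.
have e : (k - Ny = q.-1 * Ny + r)%N.
  by rewrite ek; case: (q) q1 => // q' _; rewrite mulSn /=; lia.
have lt : (k - Ny < Nx * Ny)%N by have := ltn_ord k; lia.
exists (Ordinal lt); split; first by rewrite /=; lia.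
rewrite mxE /= e; have [-> ->] := @divmod_pair Ny q.-1 r hr.
rewrite prednK // /Lent hint.
have hn : nbr q.+1 r.+1 q r.+1 by rewrite /nbr /adist subnn subSnn; lia.
rewrite hn (negbTE (nbr_neq _ _ _ _ hn)) oppr_eq0 gt_eqF // divr_gt0 //.
  apply: hD => //; move: g; rewrite /in_grid => /and4P[? ? ? ?]; apply/and4P; split; lia.
by have [] := @w_pos q.+1 r.+1 q r.+1 hn.
Qed.

Lemma chain n (k : 'I_(Nx * Ny)) : (k < n)%N -> ~~ row_SDD A k ->
  exists (s : seq 'I_(Nx * Ny)) (l : 'I_(Nx * Ny)),
      path (fun a b => A a b != 0) k (rcons s l) && row_SDD A l.
Proof.
elim: n k => [//|n IH] k hk hns.
have hint : interior Nx Ny (k %/ Ny).+1 (k %% Ny).+1.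
  by apply/negP => /negP /sdd_ext; rewrite (negbTE hns).
have [k' [lt nz]] := step k hint.
case: (boolP (row_SDD A k')) => h'.
  by exists [::], k'; rewrite /= nz h'.
have [s [l /andP[p sl]]] := IH k' (leq_trans lt hk) h'.
by exists (k' :: s), l; rewrite rcons_cons /= nz p sl.
Qed.

End Main.

Theorem proposition5p2 (R : rcfType) (Nx Ny : nat) (dx dy ell : R)
    (D : nat -> nat -> R) (sigma : nat -> nat -> R) :
  (3 <= Nx)%N -> (3 <= Ny)%N -> 0 < dx -> 0 < dy -> 0 < ell ->
  (forall i j i' j', in_grid Nx Ny i j -> in_grid Nx Ny i' j' ->
     nbr i j i' j' -> 0 < D (i + i')%N (j + j')%N) ->
  (forall i j, in_grid Nx Ny i j -> 0 <= sigma i j) ->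
  WCDD (Lmat Nx Ny dx dy ell D sigma).
Proof.
move=> hNx hNy hdx hdy hell hD hsig; split; first exact: wdd.
move=> k; apply: (@chain _ _ _ _ _ _ _ _ _ _ _ _ _ _ _ k.+1) => //.
Qed.
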